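(* Let $F:\mathbb{R}\to[0,1]$ be an arbitrary distribution function, let $\alpha\in(0,1)$, and put $\xi=F^{\wedge}(\alpha)$ and $\beta=\Delta F(\xi)$. Let $X,V$ be real random variables on a probability space $(\Omega,\mathcal{F},\mathbb{P})$ such that $V\sim U(0,1)$ and $V$ is independent of $X$. Define $F_V(X)(\omega)=F_{V(\omega)}(X(\omega))$ on $\{V\in(0,1]\}$. Then \[\mathbb{P}\big(F_V(X)\le\alpha\big)-\alpha=\mathbb{P}\big(X>\xi\text{ and }F(X)=\alpha\big)+c_\beta\big(\mathbb{P}(X=\xi)-\beta\big)+\big(\mathbb{P}(X\le\xi)-F(\xi)\big),\] where $c_\beta=0$ if $\beta=0$ and $c_\beta=\frac{\alpha-F(\xi)}{\beta}$ if $\beta\neq0$.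
   Context: A distribution function is a non-decreasing, right-continuous $F:\mathbb{R}\to[0,1]$ with limits $0$ at $-\infty$ and $1$ at $+\infty$ ($F$ need not be the distribution function of $X$). $F(x-)=\lim_{z\uparrow x}F(z)$, $\Delta F(x)=F(x)-F(x-)$, $F_\lambda(x)=F(x-)+\lambda\Delta F(x)$ for $\lambda\in[0,1]$, and $F^{\wedge}(\alpha)=\inf\{x:F(x)\ge\alpha\}$. The event $\{F_V(X)\le\alpha\}$ is understood as $\{V\in(0,1],\ F_V(X)\le\alpha\}$ (a set of full probability complement is irrelevant since $\mathbb{P}(V\in(0,1])=1$). *)

(* Defs.v *)
From HB Require Import structures.
From mathcomp Require Import all_boot all_order all_algebra.
From mathcomp Require Import all_classical all_reals all_analysis.
Set Implicit Arguments. Unset Strict Implicit. Unset Printing Implicit Defensive.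
Import Order.TTheory GRing.Theory Num.Theory.
Import numFieldNormedType.Exports.
Local Open Scope classical_set_scope.
Local Open Scope ring_scope.

Definition distribution_function (R : realType) (F : R -> R) : Prop :=
  {homo F : x y / x <= y} /\
  (forall x : R, F z @[z --> x^'+] --> F x) /\
  (F z @[z --> -oo] --> (0:R)) /\
  (F z @[z --> +oo] --> (1:R)).

Definition Fleft (R : realType) (F : R -> R) (x : R) : R :=
  lim (F z @[z --> x^'-]).

Definition jump (R : realType) (F : R -> R) (x : R) : R := F x - Fleft F x.

Definition Flam (R : realType) (F : R -> R) (lam x : R) : R :=
  Fleft F x + lam * jump F x.

Definition qinv (R : realType) (F : R -> R) (alpha : R) : R :=
  inf [set x : R | alpha <= F x].

Definition indep_rv d (T : measurableType d) (R : realType) (P : probability T R)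
  (X V : T -> R) : Prop :=
  forall A B : set R, measurable A -> measurable B ->
    P (X @^-1` A `&` V @^-1` B) = (P (X @^-1` A) * P (V @^-1` B))%E.

(* Main.v *)
Require Import Defs.
From HB Require Import structures.
From mathcomp Require Import all_boot all_order all_algebra.
From mathcomp Require Import all_classical all_reals all_analysis.
From mathcomp Require Import ring lra measurable_realfun.
Import Order.TTheory GRing.Theory Num.Theory.
Import numFieldNormedType.Exports.
Local Open Scope classical_set_scope.
Local Open Scope ring_scope.

Section Ana.
Variables (R : realType) (F : R -> R).
Hypothesis hF : distribution_function F.

Lemma Fleft_cvg x : cvg (F z @[z --> x^'-]).
Proof.
case: hF => ndF _.
apply: nondecreasing_at_left_is_cvgr.
  by apply: nearW => y a b _ _; apply: ndF.
apply: nearW => y; exists (F x) => z [s] /=; rewrite in_itv/= => /andP[_ /ltW sx] <-.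
exact: ndF.
Qed.

Lemma Fleft_ge z x : z < x -> F z <= Fleft F x.
Proof.
case: hF => ndF _ zx; apply: limr_ge; first exact: Fleft_cvg.
near=> y; apply: ndF; near: y; exact: nbhs_left_ge.
Unshelve. all: by end_near. Qed.

Lemma Fleft_ub x a : (forall z, z < x -> F z <= a) -> Fleft F x <= a.
Proof.
move=> h; apply: limr_le; first exact: Fleft_cvg.
near=> y; apply: h; near: y; exact: nbhs_left_lt.
Unshelve. all: by end_near. Qed.

Lemma Fleft_le x : Fleft F x <= F x.
Proof. case: hF => ndF _; apply: Fleft_ub => z /ltW; exact: ndF. Qed.

Lemma jump_ge0 x : 0 <= jump F x.
Proof. by rewrite /jump subr_ge0 Fleft_le. Qed.

Variable alpha : R.
Hypothesis ha : 0 < alpha < 1.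

Let S := [set x : R | alpha <= F x].

Lemma S_lb : has_lbound S.
Proof.
case: hF => _ [_ [F0 _]]; case/andP: ha => a0 _.
move: (F0) => /cvgr_lt /(_ _ a0).
case=> M [Mr HM].
exists M => x Sx; rewrite leNgt; apply/negP => xM.
by move: (HM x xM); rewrite ltNge Sx.
Qed.

Lemma S_ne : S !=set0.
Proof.
case: hF => _ [_ [_ F1]]; case/andP: ha => _ a1.
move: (F1) => /cvgr_gt /(_ _ a1).
case=> M [Mr HM]; exists (M + 1); apply/ltW/HM; rewrite ltrDl //.
Qed.

Lemma lt_xi x : x < qinv F alpha -> F x < alpha.
Proof.
move=> xq; rewrite ltNge; apply/negP => Sx.
have := ge_inf S_lb Sx; rewrite -/(qinv F alpha) => /(lt_le_trans xq).
by rewrite ltxx.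
Qed.

Lemma gt_xi x : qinv F alpha < x -> alpha <= F x.
Proof.
case: hF => ndF _ qx; have [y Sy yx] := inf_lt S_ne qx.
by apply: le_trans Sy _; apply: ndF; apply: ltW.
Qed.

Lemma F_xi : alpha <= F (qinv F alpha).
Proof.
case: hF => _ [rc _].
apply: (cvgr_to_ge (rc _)); near=> y; apply: gt_xi; near: y.
exact: nbhs_right_gt.
Unshelve. all: by end_near. Qed.


Definition tt_ := let xi := qinv F alpha in
  if jump F xi == 0 then 1 else (alpha - Fleft F xi) / jump F xi.

Lemma tt01 : 0 <= tt_ <= 1.
Proof.
rewrite /tt_; set xi := qinv F alpha.
have Fx := F_xi. have Gle : Fleft F xi <= alpha.
  by apply: Fleft_ub => z zx; apply/ltW/lt_xi.
have j0 := jump_ge0 xi.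
case: eqP => [_|/eqP jn0]; first by rewrite ler01 lexx.
have jp : 0 < jump F xi by rewrite lt_neqAle eq_sym jn0 j0.
rewrite divr_ge0 ?subr_ge0 //=; last exact: Fleft_le.
rewrite ler_pdivrMr // mul1r /jump; lra.
Qed.

Lemma key (v x : R) : 0 < v <= 1 ->
  (Flam F v x <= alpha <->
   x < qinv F alpha \/ (x = qinv F alpha /\ v <= tt_) \/
   (qinv F alpha < x /\ F x = alpha)).
Proof.
case/andP=> v0 v1; rewrite /Flam.
have jx := jump_ge0 x; have Fl := Fleft_le x.
case: (ltgtP x (qinv F alpha)) => [xq|qx|->].
- split=> [_|_]; first by left.
  have := lt_xi _ xq; move: jx Fl; rewrite /jump => jx Fl Fa.
  have : v * (F x - Fleft F x) <= F x - Fleft F x by rewrite ler_piMl.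
  lra.
- have Fq := F_xi; have Fg := Fleft_ge _ _ qx.
  split=> [h|[//|[[e _]|[_ Fa]]]].
  + right; right; split => //; move: jx h; rewrite /jump => jx h.
    have : v * (F x - Fleft F x) <= 0 by lra.
    move=> hv; have : F x - Fleft F x <= 0.
      by rewrite leNgt; apply/negP => hp; move: hv; rewrite leNgt mulr_gt0.
    have := mulr_ge0 (ltW v0) jx; lra.
  + by move: qx; rewrite e ltxx.
  + have e : Fleft F x = alpha by lra.
    by rewrite /jump e Fa subrr mulr0 addr0.
- have Gle : Fleft F (qinv F alpha) <= alpha.
    by apply: Fleft_ub => z zx; apply/ltW/lt_xi.
  have Fq := F_xi.
  have hl : [\/ False, False | False] -> False by case.
  split=> [h|[|[[_ vt]|[]]]]; rewrite ?ltxx //.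
  + right; left; split => //; rewrite /tt_ /=.
    case: eqP => [_//|/eqP jn0].
    have jp : 0 < jump F (qinv F alpha) by rewrite lt_neqAle eq_sym jn0 jump_ge0.
    by rewrite ler_pdivlMr // ; lra.
  + move: vt; rewrite /tt_ /=; case: eqP => [->|/eqP jn0 vt].
      by rewrite mulr0 addr0.
    have jp : 0 < jump F (qinv F alpha) by rewrite lt_neqAle eq_sym jn0 jump_ge0.
    by move: vt; rewrite ler_pdivlMr //; lra.
Qed.

End Ana.
Lemma unif_oc (R : realType) (t : R) : 0 <= t <= 1 ->
  uniform_prob (@ltr01 R) `]0, t] = t%:E.
Proof.
case/andP=> t0 t1.
rewrite /uniform_prob integral_uniform_pdf setIidl; last first.
  move=> x /=; rewrite !in_itv/= => /andP[x0 xt].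
  by rewrite (ltW x0) (le_trans xt t1).
rewrite (eq_integral (cst 1%:E)); last first.
  move=> x; rewrite inE/= in_itv/= => /andP[x0 xt].
  by rewrite /uniform_pdf (ltW x0) (le_trans xt t1) subr0 invr1.
rewrite integral_cst//= mul1e lebesgue_measure_itv/= lte_fin.
case: ltP => [t0'|]; first by rewrite sube0.

by move=> tle; congr EFin; apply/eqP; rewrite eq_le t0 tle.
Qed.

Theorem mainTheorem7 (R : realType) (F : R -> R) (alpha : R)
  (d : measure_display) (T : measurableType d) (P : probability T R)
  (X V : T -> R) :
  distribution_function F ->
  0 < alpha < 1 ->
  measurable_fun setT X -> measurable_fun setT V ->
  (forall B : set R, measurable B ->
     P (V @^-1` B) = uniform_prob (@ltr01 R) B) ->
  indep_rv P X V ->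
  let xi := qinv F alpha in
  let beta := jump F xi in
  let c := if beta == 0 then 0 else (alpha - F xi) / beta in
  (P [set w | (0 < V w <= 1)%R /\ (Flam F (V w) (X w) <= alpha)%R] - alpha%:E =
   P [set w | (xi < X w)%R /\ F (X w) = alpha]
   + c%:E * (P [set w | X w = xi] - beta%:E)
   + (P [set w | (X w <= xi)%R] - (F xi)%:E))%E.
Proof.
move=> hF ha mX mV hU hind xi beta c.
have mpX : forall B, measurable B -> measurable (X @^-1` B).
  by move=> B mB; rewrite -[X @^-1` B]setTI; apply: mX.
have mpV : forall B, measurable B -> measurable (V @^-1` B).
  by move=> B mB; rewrite -[V @^-1` B]setTI; apply: mV.
have mF : measurable_fun setT F.
  by apply: nondecreasing_measurable => //; case: hF.
pose A := [set x : R | xi < x /\ F x = alpha].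
have mA : measurable A.
  have -> : A = `]xi, +oo[ `&` (F @^-1` [set alpha]).
    by apply/seteqP; split => x /=; rewrite in_itv /= andbT.
  apply: measurableI => //; rewrite -[_ @^-1` _]setTI; exact: mF.
pose t := tt_ R F alpha.
have t01 : 0 <= t <= 1 := @tt01 R F hF alpha ha.
pose E1 := X @^-1` `]-oo, xi[. pose E2 := X @^-1` [set xi]. pose E3 := X @^-1` A.
pose W := V @^-1` `]0, 1]. pose Wt := V @^-1` `]0, t].
have hE : [set w | (0 < V w <= 1)%R /\ (Flam F (V w) (X w) <= alpha)%R] =
   (E1 `&` W) `|` (E2 `&` Wt) `|` (E3 `&` W).
  apply/seteqP; split => w /=.
  - case=> hv /(@key R F hF alpha ha) -/(_ hv) [h|[[h1 h2]|h]];
      rewrite /E1/E2/E3/W/Wt/A/= ?in_itv/=.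
    + by left; left; rewrite h hv.
    + by left; right; rewrite h1; case/andP: hv => -> _.
    + by right; rewrite hv.
  - case=> [[[h1 h2]|[h1 h2]]|[h1 h2]]; move: h1 h2;
      rewrite /E1/E2/E3/W/Wt/A/= ?in_itv/=.
    + move=> h1 hv; split => //; apply/(@key R F hF alpha ha) => //; by left.
    + move=> h1 /andP[v0 vt]; have hv : 0 < V w <= 1.
        by rewrite v0 /=; apply: le_trans vt _; case/andP: t01.
      split => //; apply/(@key R F hF alpha ha) => //; by right; left.
    + move=> h1 hv; split => //; apply/(@key R F hF alpha ha) => //; by right; right.
have mI1 : measurable (`]-oo, xi[ : set R) by exact: measurable_itv.
have mI0 : measurable (`]0, 1] : set R) by exact: measurable_itv.
have mIt : measurable (`]0, t] : set R) by exact: measurable_itv.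
have mS : measurable [set xi] by exact: measurable_set1.
have mE1 : measurable E1 by exact: mpX.
have mE2 : measurable E2 by exact: mpX.
have mE3 : measurable E3 by exact: mpX.
have mW : measurable W by exact: mpV.
have mWt : measurable Wt by exact: mpV.
have fin : forall B, measurable B -> P B = (fine (P B))%:E.
  by move=> B mB; rewrite fineK // fin_num_measure.
have hle : [set w | (X w <= xi)%R] = E1 `|` E2.
  apply/seteqP; split => w /=; rewrite /E1 /E2 /= ?in_itv /=.
    by rewrite le_eqVlt => /orP[/eqP ->|->]; [right|left].
  by case=> [/ltW|->].
rewrite hE measureU //; last 3 first.
- by apply: measurableU; apply: measurableI.
- exact: measurableI.
- apply/seteqP; split => w //=; rewrite /E1/E2/E3/A/= ?in_itv/=.
  case=> [[[h1 _]|[h1 _]] [[h3 _] _]].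
  + by move: (lt_trans h1 h3); rewrite ltxx.
  + by move: h3; rewrite h1 ltxx.
rewrite measureU //; last 3 first.
- exact: measurableI.
- exact: measurableI.
- apply/seteqP; split => w //=; rewrite /E1/E2/= ?in_itv/=.
  by case=> [[h1 _] [h2 _]]; move: h1; rewrite h2 ltxx.
rewrite hle measureU //; last first.
  apply/seteqP; split => w //=; rewrite /E1/E2/= ?in_itv/=.
  by case=> [h1 h2]; move: h1; rewrite h2 ltxx.
have e1 : P (E1 `&` W) = (P E1 * P W)%E := hind _ _ mI1 mI0.
have e2 : P (E2 `&` Wt) = (P E2 * P Wt)%E := hind _ _ mS mIt.
have e3 : P (E3 `&` W) = (P E3 * P W)%E := hind _ _ mA mI0.
have eW : P W = 1%:E.
  by transitivity (uniform_prob (@ltr01 R) `]0, 1]); [exact: hU|apply: unif_oc; rewrite ler01 lexx].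
have eWt : P Wt = t%:E.
  by transitivity (uniform_prob (@ltr01 R) `]0, t]); [exact: hU|apply: unif_oc].
pose p1 := fine (P E1). pose p2 := fine (P E2). pose p3 := fine (P E3).
have q1 : P E1 = p1%:E by rewrite (fin E1).
have q2 : P E2 = p2%:E by rewrite (fin E2).
have q3 : P E3 = p3%:E by rewrite (fin E3).
have r1 : P (E1 `&` W) = p1%:E by rewrite e1 eW q1 mule1.
have r2 : P (E2 `&` Wt) = (p2 * t)%:E by rewrite e2 eWt q2.
have r3 : P (E3 `&` W) = p3%:E by rewrite e3 eW q3 mule1.
transitivity ((p1 + p2 * t + p3 - alpha)%:E).
  rewrite EFinB !EFinD.
  rewrite -[X in (X - _)%E]/((P (E1 `&` W) + P (E2 `&` Wt) + P (E3 `&` W))%E).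
  by rewrite r1 r2 r3.
change [set w | (xi < X w)%R /\ F (X w) = alpha] with E3.
change [set w | X w = xi] with E2.
rewrite -[(P E1 + P E2)%R]/(P E1 + P E2)%E q1 q2 q3.
rewrite -?EFinB -?EFinD -?EFinM -?EFinB -?EFinD -?EFinM -?EFinB -?EFinD; congr EFin.
have Fq : alpha <= F xi := @F_xi R F hF alpha ha.
have Gle : Fleft F xi <= alpha.
  by apply: (@Fleft_ub R F hF) => z zx; apply/ltW/(@lt_xi R F hF alpha ha).
have hFx : F xi = Fleft F xi + beta by rewrite /beta /jump; lra.
rewrite /t /tt_ -/xi -/beta /c.
case: eqP => [b0|/eqP b0].
  have : F xi = alpha by lra.
  lra.
rewrite hFx; field.
exact: b0.
Qed.
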